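(* For every integer $n\geq 0$, $$M_n=\sum_{k=0}^{n}(-1)^{n-k}\binom{n}{k}C_{k+1}=\sum_{k=0}^{n}(-1)^{k}3^{n-k}\binom{n}{k}C_{k+1}=\frac{1}{(\sqrt2)^{n+2}}\sum_{k=0}^{n}(\sqrt2-3)^{n-k}\binom{n}{k}S_{k+1}=\frac{1}{(\sqrt2)^{n+2}}\sum_{k=0}^{n}(-1)^k(3+\sqrt2)^{n-k}\binom{n}{k}S_{k+1},$$ where $C_m$, $M_m$, $S_m$ are the Catalan, Motzkin and (large) Schröder numbers.
   Context: $C_m=\frac{1}{m+1}\binom{2m}{m}$ is the Catalan number; $M_m=\sum_{k=0}^{\lfloor m/2\rfloor}\binom{m}{2k}C_k$ is the Motzkin number; $S_m$ is the number of Schröder paths from $(0,0)$ to $(m,m)$ with steps $(0,1),(1,0),(1,1)$ never going below the line $y=x$, i.e. $S_m=\sum_{k=0}^{m}\binom{m+k}{2k}C_k$ (so $S_0=1,S_1=2,S_2=6,S_3=22,\dots$). *)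

(* Defs.v *)
From HB Require Import structures.
From mathcomp Require Import all_boot all_order all_algebra.
Set Implicit Arguments. Unset Strict Implicit. Unset Printing Implicit Defensive.
Import Order.TTheory GRing.Theory Num.Theory.

Definition catalan (m : nat) : nat := 'C(m.*2, m) %/ m.+1.

Definition motzkin (m : nat) : nat :=
  \sum_(k < m./2.+1) 'C(m, k.*2) * catalan k.

Definition schroeder (m : nat) : nat :=
  \sum_(k < m.+1) 'C(m + k, k.*2) * catalan k.

(* Main.v *)
Require Import Defs.
From HB Require Import structures.
From mathcomp Require Import all_boot all_order all_algebra.
From mathcomp Require Import ring zify.
Import Order.TTheory GRing.Theory Num.Theory.
Local Open Scope ring_scope.


Section T.
Variable R : comPzRingType.

Definition T (e : R) (u : nat -> R) (n : nat) : R :=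
  \sum_(k < n.+1) ('C(n, k))%:R * e ^+ (n - k) * u k.

Lemma eq_T e u1 u2 n : (forall k, (k <= n)%N -> u1 k = u2 k) -> T e u1 n = T e u2 n.
Proof. by move=> H; apply: eq_bigr => [[k hk]] _ /=; rewrite H. Qed.

Lemma T0 e u : T e u 0 = u 0%N.
Proof. by rewrite /T big_ord_recl big_ord0 /= bin0 expr0 !mul1r addr0. Qed.

Lemma TS e u n : T e u n.+1 = e * T e u n + T e (fun k => u k.+1) n.
Proof.
rewrite /T big_ord_recl /= subn0.
under eq_bigr => i _ do rewrite /bump /= add1n binS natrD !mulrDl subSS.
rewrite big_split /= addrA; congr (_ + _).
rewrite mulr_sumr [in RHS]big_ord_recl /= bin0 subn0 exprS.
rewrite (big_ord_recr n) /= bin_small // mul0r mul0r addr0.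
congr (_ + _); first by rewrite bin0; ring.
apply: eq_bigr => i _; rewrite /bump /= add1n.
have hi : (i < n)%N := ltn_ord i.
rewrite subnS.
have -> : (n - i = (n - i.+1).+1)%N by rewrite subnSK.
rewrite exprS /=; ring.
Qed.

Lemma T_lin e (a : R) f g n : T e (fun k => a * f k + g k) n = a * T e f n + T e g n.
Proof.
rewrite /T mulr_sumr -big_split /=; apply: eq_bigr => i _; ring.
Qed.

Lemma T_comp d b v n : T d (T b v) n = T (b + d) v n.
Proof.
elim: n v => [|n IH] v; first by rewrite !T0.
rewrite TS (IH v).
rewrite (eq_T _ (fun k => T b v k.+1) (fun k => b * T b v k + T b (fun j => v j.+1) k)); last by move=> k _; rewrite TS.
rewrite T_lin (IH v) (IH (fun j => v j.+1)) [in RHS]TS; ring.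
Qed.

Lemma T_refl b v n : (forall i, odd i -> v i = 0) -> T (- b) v n = (-1) ^+ n * T b v n.
Proof.
move=> Hv; rewrite /T mulr_sumr; apply: eq_bigr => [[i hi]] _ /=.
case Oi: (odd i); first by rewrite Hv // !mulr0.
rewrite [(-1) ^+ n](_ : _ = (-1) ^+ ((n - i) + i)%N); last by rewrite subnK.
rewrite exprD -[(-1) ^+ i]signr_odd Oi expr0 mulr1. rewrite [(- b) ^+ _]exprNn; ring.
Qed.

Lemma T_scale s b u n : T (s * b) (fun i => s ^+ i * u i) n = s ^+ n * T b u n.
Proof.
rewrite /T mulr_sumr; apply: eq_bigr => [[i hi]] _ /=.
rewrite [s ^+ n](_ : _ = s ^+ ((n - i) + i)%N); last by rewrite subnK.
rewrite exprD exprMn; ring.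
Qed.

Lemma T_ext e1 e2 u n : e1 = e2 -> T e1 u n = T e2 u n.
Proof. by move->. Qed.

End T.
Arguments T {R}.


Section P.
Variable R : comNzRingType.

Lemma sum_pick N (e : nat) (F : nat -> R) :
  \sum_(i < N) F i * (e == i :> nat)%:R = if (e < N)%N then F e else 0.
Proof.
elim: N => [|N IH]; first by rewrite big_ord0.
rewrite big_ord_recr /= IH ltnS.
case: (ltngtP e N) => h.
- by rewrite mulr0 addr0.
- by rewrite mulr0 addr0.
- by rewrite h mulr1 add0r.
Qed.

Lemma coef_X1 N e : (('X + 1 : {poly R}) ^+ N)`_e = ('C(N, e))%:R.
Proof.
rewrite exprD1n coef_sum.
rewrite (eq_bigr (fun i : 'I_N.+1 => ('C(N, i))%:R * (e == i)%:R)); last first.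
  by move=> i _; rewrite coefMn coefXn mulr_natl.
rewrite (sum_pick _ _ (fun i => ('C(N, i))%:R)); case: ltnP => // h; by rewrite bin_small.
Qed.

Lemma coef_sq (a c : R) i d :
  ((a%:P + c *: 'X^2) ^+ i)`_d =
  if odd d then 0 else ('C(i, d./2))%:R * c ^+ d./2 * a ^+ (i - d./2).
Proof.
rewrite exprDn coef_sum.
rewrite (eq_bigr (fun j : 'I_i.+1 => ('C(i, j))%:R * c ^+ j * a ^+ (i - j) * (d == j.*2)%:R)); last first.
  move=> j _; rewrite coefMn -rmorphXn /= coefCM exprZn coefZ -exprM coefXn.
  rewrite -mulr_natl mul2n; ring.
case Od: (odd d).
  rewrite big1 // => j _; case: eqP => [E|]; last by rewrite mulr0.
  by move: Od; rewrite E odd_double.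
have Ed : d = (d./2).*2 by rewrite -{1}(odd_double_half d) Od.
rewrite (eq_bigr (fun j : 'I_i.+1 => ('C(i, j))%:R * c ^+ j * a ^+ (i - j) * (d./2 == j)%:R)); last first.
  move=> j _; congr (_ * (_)%:R); by rewrite {1}Ed (inj_eq double_inj).
rewrite (sum_pick _ _ (fun j => ('C(i, j))%:R * c ^+ j * a ^+ (i - j))); case: ltnP => // h; by rewrite bin_small // !mul0r.
Qed.

Lemma coef_tri (a b c : R) n k e :
  ((b *: 'X + (a%:P + c *: 'X^2)) ^+ n * 'X^k)`_e =
  \sum_(i < n.+1) ('C(n, i))%:R * b ^+ (n - i) *
     (if (e < n - i + k)%N then 0 else ((a%:P + c *: 'X^2) ^+ i)`_(e - (n - i + k))).
Proof.
rewrite exprDn mulr_suml coef_sum; apply: eq_bigr => i _.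
set y := (a%:P + c *: 'X^2) ^+ i.
have -> : (b *: 'X) ^+ (n - i) * y *+ 'C(n, i) * 'X^k =
          (b ^+ (n - i) *: (y * 'X^(n - i + k))) *+ 'C(n, i).
  rewrite exprZn -!mul_polyC exprD; ring.
rewrite coefMn coefZ coefMXn; case: ifP => _; rewrite ?mulr0 ?mul0rn; ring.
Qed.

End P.


Lemma catalan_nat j : catalan j = ('C(j.*2, j) - 'C(j.*2, j.+1))%N.
Proof.
have H := mul_bin_left j.*2 j.
have E : (j.*2 - j = j)%N by rewrite -addnn addnK.
rewrite E in H.
rewrite /catalan.
set B := 'C(j.*2, j) in H *; set B' := 'C(j.*2, j.+1) in H *.
have HB : B = (j.+1 * (B - B'))%N by nia.
by rewrite {1}HB mulKn.
Qed.

Section C.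
Variable R : comNzRingType.

Lemma catalanR j : (catalan j)%:R = ('C(j.*2, j))%:R - ('C(j.*2, j.+1))%:R :> R.
Proof.
rewrite catalan_nat natrB //.
have H := mul_bin_left j.*2 j.
have E : (j.*2 - j = j)%N by rewrite -addnn addnK.
rewrite E in H; nia.
Qed.

Definition vC (i : nat) : R := if odd i then 0 else (catalan i./2)%:R.

Lemma vC_odd i : odd i -> vC i = 0.
Proof. by rewrite /vC => ->. Qed.

Lemma X1sq : ('X + 1 : {poly R}) ^+ 2 = 2 *: 'X + (1%:P + 1 *: 'X^2).
Proof. rewrite scale1r -mul_polyC; ring. Qed.

Lemma cat_pascal n : (catalan n.+1)%:R =
   ('C(n.*2, n))%:R - ('C(n.*2, n.+2))%:R :> R.
Proof.
rewrite catalanR doubleS !binS.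
have S : 'C((n.*2).+1, n) = 'C((n.*2).+1, n.+1).
  rewrite -{1}(bin_sub (_ : n.+1 <= (n.*2).+1)%N); last by rewrite ltnS -addnn leq_addr.
  by rewrite subSS -addnn addnK.
rewrite S binS !natrD; ring.
Qed.

Lemma coef_tri0 (a b c : R) n k e : e = (n + k)%N ->
  ((b *: 'X + (a%:P + c *: 'X^2)) ^+ n)`_e =
  \sum_(i < n.+1) ('C(n, i))%:R * b ^+ (n - i) * ((a%:P + c *: 'X^2) ^+ i)`_(i + k).
Proof.
move=> ->; have := coef_tri _ a b c n 0 (n + k); rewrite expr0 mulr1 => ->; apply: eq_bigr => [[i hi]] _ /=.
rewrite addn0 ltnNge (_ : (n - i <= n + k)%N) /=; last by lia.
by rewrite (_ : (n + k - (n - i) = i + k)%N) //; lia.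
Qed.

Lemma touchard n : (catalan n.+1)%:R = T 2 vC n :> R.
Proof.
rewrite cat_pascal.
have E : forall e, ('C(n.*2, e))%:R = ((2 *: 'X + (1%:P + 1 *: 'X^2)) ^+ n)`_e :> R.
  by move=> e; rewrite -X1sq -exprM mul2n coef_X1.
rewrite !E (coef_tri0 _ _ _ _ 0 n) ?addn0 // (coef_tri0 _ _ _ _ 2 n.+2) ?addn2 //.
rewrite -sumrB /T; apply: eq_bigr => [[i hi]] _ /=.
rewrite !coef_sq addn0 addn2 /= negbK /vC.
case Oi: (odd i); first by rewrite subrr mulr0.
rewrite !expr1n !mulr1 -mulrBr; congr (_ * _).
rewrite catalanR; suff -> : (i./2.*2 = i)%N by [].
by rewrite -{2}(odd_double_half i) Oi.
Qed.
End C.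


Lemma bin_trin a b c : (c <= b)%N -> (b <= a)%N ->
  ('C(a, b) * 'C(b, c) = 'C(a, c) * 'C(a - c, b - c))%N.
Proof.
move=> hcb hba.
have hX : (0 < c`! * (b - c)`! * (a - b)`!)%N by rewrite !muln_gt0 !fact_gt0.
apply/eqP; rewrite -(eqn_pmul2r hX); apply/eqP.
have e1 := bin_fact hcb.
have e2 := bin_fact hba.
have e3 := bin_fact (leq_trans hcb hba).
have e4 := bin_fact (_ : b - c <= a - c)%N.
have E : (a - c - (b - c) = a - b)%N by lia.
rewrite E in e4.
transitivity ('C(a, b) * ('C(b, c) * (c`! * (b - c)`!)) * (a - b)`!)%N; first by ring.
rewrite e1 -mulnA e2.
transitivity ('C(a, c) * (c`! * ('C(a - c, b - c) * ((b - c)`! * (a - b)`!))))%N; last by ring.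
rewrite e4 ?e3 //; lia.
Qed.

Lemma I1 m k : ('C(m + k, k.*2) * 'C(k.*2, k) = 'C(m, k) * 'C(m + k, m))%N.
Proof.
case: (leqP k m) => h.
  rewrite bin_trin; last 2 first.
  - by rewrite -addnn leq_addr.
  - by rewrite -addnn leq_add2r.
  rewrite (_ : (m + k - k = m)%N) ?addnK // (_ : (k.*2 - k = k)%N); last by rewrite -addnn addnK.
  rewrite mulnC; congr (_ * _)%N.
  by rewrite -{1}(bin_sub (leq_addl m k)) addnK.
rewrite (bin_small h) (bin_small (_ : m + k < k.*2)%N) //; rewrite -addnn; lia.
Qed.

Lemma I2 n k : ('C(n + 2 + k, (k.+1).*2) * 'C((k.+1).*2, k.+2) = 'C(n, k) * 'C(n + 2 + k, n))%N.
Proof.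
case: (leqP k n) => h.
  rewrite bin_trin; last 2 first.
  - by rewrite doubleS !ltnS -addnn leq_addr.
  - rewrite doubleS -addnn; lia.
  rewrite (_ : (n + 2 + k - k.+2 = n)%N); last by lia.
  rewrite (_ : ((k.+1).*2 - k.+2 = k)%N); last by rewrite doubleS -addnn; lia.
  rewrite mulnC; congr (_ * _)%N.
  rewrite -{1}(bin_sub (_ : k.+2 <= n + 2 + k)%N); last by lia.
  by congr 'C(_, _); lia.
rewrite (bin_small h) (bin_small (_ : n + 2 + k < (k.+1).*2)%N) //; rewrite -addnn; lia.
Qed.

Section S.
Variable R : comNzRingType.

Lemma schroeder_split n : (schroeder n.+1)%:R =
  \sum_(k < n.+2) ('C(n.+1, k))%:R * ('C(n.+1 + k, n.+1))%:R -
  \sum_(k < n.+1) ('C(n, k))%:R * ('C(n + 2 + k, n))%:R :> R.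
Proof.
rewrite /schroeder natr_sum.
under eq_bigr => k _ do rewrite natrM catalanR mulrBr -!natrM I1.
rewrite sumrB; congr (_ - _); first by apply: eq_bigr => k _; rewrite natrM.
rewrite big_ord_recl /= (bin_small (_ : 0 < 1)%N) // natrM mulr0 add0r.
apply: eq_bigr => k _; rewrite /bump /= add1n -natrM -I2.
by rewrite (_ : (n.+1 + k.+1 = n + 2 + k)%N) //; lia.
Qed.

Definition Qp : {poly R} := 3 *: 'X + (2%:P + 1 *: 'X^2).

Lemma Qp_fact : ('X + 1) * ('X + 1 + 1) = Qp.
Proof. rewrite /Qp scale1r -mul_polyC !polyC_natr; ring. Qed.

Lemma partA m : \sum_(k < m.+1) ('C(m, k))%:R * ('C(m + k, m))%:R = (Qp ^+ m)`_m.
Proof.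
rewrite -Qp_fact exprMn [('X + 1 + 1) ^+ _]exprD1n mulr_sumr coef_sum; apply: eq_bigr => k _.
by rewrite [in RHS]mulrnAr coefMn -exprD coef_X1 mulr_natl.
Qed.

Lemma partB n : \sum_(k < n.+1) ('C(n, k))%:R * ('C(n + 2 + k, n))%:R =
   ((('X + 1) ^+ 2 * Qp ^+ n))`_n.
Proof.
rewrite -Qp_fact exprMn [('X + 1 + 1) ^+ _]exprD1n mulrA mulr_sumr coef_sum; apply: eq_bigr => k _.
rewrite [in RHS]mulrnAr coefMn -!exprD coef_X1 mulr_natl.
by rewrite (addnC 2%N n).
Qed.
End S.

Section S2.
Variable R : comNzRingType.

Definition yp (i : nat) : {poly R} := ((2 : R)%:P + 1 *: 'X^2) ^+ i.

Lemma symm_term i k : 2 ^+ k * (yp i)`_(i + k) = if (i < k)%N then 0 else (yp i)`_(i - k).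
Proof.
rewrite /yp !coef_sq.
have H1 := odd_double_half (i + k).
have H2 := odd_double_half (i - k).
set h1 := (i + k)./2 in H1 *; set h2 := (i - k)./2 in H2 *.
case: (ltnP i k) => hik.
  case O: (odd (i + k)); first by rewrite mulr0.
  rewrite O /= in H1.
  rewrite bin_small ?mul0r ?mulr0 //; lia.
have -> : odd (i - k) = odd (i + k).
  by rewrite -(subnK hik) -addnA addnn oddD odd_double addbF addnK.
case O: (odd (i + k)); first by rewrite mulr0.
rewrite O /= in H1 H2.
have e1 : (i - h1 = h2)%N by lia.
have e2 : (i - h2 = h1)%N by lia.
have e3 : (h1 = h2 + k)%N by lia.
have eC : 'C(i, h1) = 'C(i, h2) by rewrite -e2 bin_sub //; lia.
rewrite eC e1 e2 !expr1n !mulr1 e3 exprD; ring.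
Qed.

Lemma sym n k : 2 ^+ k * (Qp R ^+ n)`_(n + k) = (Qp R ^+ n * 'X^k)`_n.
Proof.
rewrite /Qp coef_tri (coef_tri0 _ _ _ _ _ k (n + k)) // mulr_sumr.
apply: eq_bigr => [[i hi]] _ /=.
have := symm_term i k; rewrite /yp => E.
rewrite (_ : (n < n - i + k)%N = (i < k)%N); last by apply/idP/idP; lia.
rewrite (_ : (n - (n - i + k))%N = (i - k)%N); last by lia.
rewrite -E; ring.
Qed.

Definition w2 (i : nat) : R := if odd i then 0 else 2 ^+ i./2 * (catalan i./2)%:R.

Lemma T3w n : T 3 w2 n = (Qp R ^+ n)`_n - 2 * (Qp R ^+ n)`_(n + 2).
Proof.
rewrite /Qp (coef_tri0 _ _ _ _ _ 0 n) ?addn0 // (coef_tri0 _ _ _ _ _ 2 (n + 2)) //.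
rewrite mulr_sumr -sumrB /T; apply: eq_bigr => [[i hi]] _ /=.
rewrite !coef_sq addn0 addn2 /= negbK /w2.
case Oi: (odd i); first by rewrite !mulr0 subrr.
have Hi := odd_double_half i; rewrite Oi /= in Hi.
rewrite catalanR.
set h := i./2 in Hi *.
have -> : (h.*2 = i)%N by lia.
rewrite !expr1n !mulr1 (_ : (i - h = h)%N); last by lia.
case: h Hi => [|h] Hi.
  rewrite (bin_small (_ : i < 1)%N); last by lia.
  ring.
rewrite (_ : (i - h.+2 = h)%N); last by lia.
rewrite exprS; ring.
Qed.

Lemma schroeder_T n : (schroeder n.+1)%:R = 2 * T 3 w2 n :> R.
Proof.
rewrite schroeder_split partA partB T3w.
set p := Qp R ^+ n.
have hA : Qp R ^+ n.+1 = p * 'X^2 + 3 *: (p * 'X^1) + 2 *: p.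
  rewrite exprSr /p /Qp -!mul_polyC !polyC_natr polyC1; ring.
have hB : ('X + 1) ^+ 2 * p = p * 'X^2 + 2 *: (p * 'X^1) + p.
  rewrite -!mul_polyC !polyC_natr; ring.
rewrite hA hB !coefD !coefZ.
have s1 := sym n 1; have s2 := sym n 2.
rewrite -/p in s1 s2.
rewrite (coefMXn 2 p n.+1) (coefMXn 1 p n.+1) /= subn1 /=.
have -> : (if (n.+1 < 2)%N then 0 else p`_(n.+1 - 2)) = (p * 'X^1)`_n.
  by rewrite coefMXn.
rewrite -s1 -s2 addn1; ring.
Qed.
End S2.


Lemma sum_even (R : comNzRingType) (h : nat -> R) N : (forall i, odd i -> h i = 0) ->
  \sum_(i < N.+1) h i = \sum_(j < N./2.+1) h (j.*2).
Proof.
move=> Hh; elim: N => [|N IH]; first by rewrite !big_ord_recl !big_ord0.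
rewrite big_ord_recr /= IH.
have E := odd_double_half N.
case ON: (odd N).
  rewrite ON in E.
  rewrite uphalf_half ON /= [in RHS]big_ord_recr /=; congr (_ + h _).
  move: E => /= E; lia.
rewrite Hh /=; last by rewrite ON.
by rewrite addr0 uphalf_half ON.
Qed.

Lemma motzkinT (R : comNzRingType) n : (motzkin n)%:R = T 1 (vC R) n.
Proof.
rewrite /T (sum_even _ (fun i => 'C(n, i)%:R * 1 ^+ (n - i) * vC R i)); last first.
  by move=> i Oi; rewrite vC_odd // mulr0.
rewrite /motzkin natr_sum; apply: eq_bigr => j _.
by rewrite /vC odd_double doubleK expr1n mulr1 natrM.
Qed.

Theorem proposition3p3 (R : rcfType) (n : nat) :
  let s2 : R := Num.sqrt (2 : R) in
  [/\ (motzkin n)%:R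
        = \sum_(k < n.+1)
            (-1 : R) ^+ (n - k)%N * ('C(n, k))%:R * (catalan k.+1)%:R,
      (motzkin n)%:R
        = \sum_(k < n.+1)
            (-1 : R) ^+ k * (3 : R) ^+ (n - k)%N * ('C(n, k))%:R
              * (catalan k.+1)%:R,
      (motzkin n)%:R
        = (s2 ^+ n.+2)^-1 *
          \sum_(k < n.+1)
            (s2 - 3) ^+ (n - k)%N * ('C(n, k))%:R * (schroeder k.+1)%:R
    & (motzkin n)%:R
        = (s2 ^+ n.+2)^-1 *
          \sum_(k < n.+1)
            (-1 : R) ^+ k * (3 + s2) ^+ (n - k)%N * ('C(n, k))%:R
              * (schroeder k.+1)%:R].
Proof.
move=> s.
have s2 : s ^+ 2 = 2 by rewrite sqr_sqrtr // ler0n.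
have s0 : s != 0 by rewrite sqrtr_eq0 -ltNge ltr0n.
have M := motzkinT R n.
have Tc : forall k, (catalan k.+1)%:R = T 2 (vC R) k by move=> k; exact: touchard.
have ws : forall i, w2 R i = s ^+ i * vC R i.
  move=> i; rewrite /w2 /vC; case Oi: (odd i); first by rewrite mulr0.
  have Hi := odd_double_half i; rewrite Oi /= in Hi.
  by rewrite -{3}Hi -mul2n exprM s2.
have Sc : forall k, (schroeder k.+1)%:R = 2 * (s ^+ k * T (3 / s) (vC R) k).
  move=> k; rewrite schroeder_T (eq_T _ _ (w2 R) (fun i => s ^+ i * vC R i)); last by move=> i _; rewrite ws.
  by rewrite -T_scale; congr (2 * _); apply: T_ext; field.
split.
- rewrite M -(T_ext _ _ _ _ _ (_ : 2 + -1 = 1)); last by ring.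
  under [RHS]eq_bigr => k _ do rewrite Tc.
  rewrite -T_comp /T; apply: eq_bigr => k _; ring.
- rewrite M -(T_ext _ _ _ _ _ (_ : -2 + 3 = 1)); last by ring.
  have E : forall k : nat, (-1) ^+ k * 3 ^+ (n - k) * ('C(n, k))%:R * (catalan k.+1)%:R
      = ('C(n, k))%:R * 3 ^+ (n - k) * T (-2) (vC R) k.
    move=> k; rewrite Tc T_refl; [ring | exact: vC_odd].
  under [RHS]eq_bigr => k _ do rewrite E.
  by rewrite -T_comp.
- rewrite M (_ : \sum_(k < n.+1) (s - 3) ^+ (n - k) * 'C(n, k)%:R * (schroeder k.+1)%:R
     = 2 * T (s * (1 - 3 / s)) (fun k => s ^+ k * T (3 / s) (vC R) k) n); last first.
    rewrite (T_ext _ _ _ _ _ (_ : s * (1 - 3 / s) = s - 3)); last by field.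
    under eq_bigr => k _ do rewrite Sc.
    rewrite /T mulr_sumr; apply: eq_bigr => k _; ring.
  rewrite T_scale T_comp (T_ext _ _ _ _ _ (_ : 3 / s + (1 - 3 / s) = 1)); last by field.
  rewrite (_ : s ^+ n.+2 = s ^+ n * 2); last by rewrite -s2 -exprD addn2.
  have sn : s ^+ n != 0 := expf_neq0 _ s0.
  by field; rewrite ?sn ?pnatr_eq0.
- rewrite M (_ : \sum_(k < n.+1) (-1) ^+ k * (3 + s) ^+ (n - k) * 'C(n, k)%:R * (schroeder k.+1)%:R
     = 2 * T (s * ((3 + s) / s)) (fun k => s ^+ k * T (- (3 / s)) (vC R) k) n); last first.
    rewrite (T_ext _ _ _ _ _ (_ : s * ((3 + s) / s) = 3 + s)); last by field.
    have E : forall k : nat, (-1) ^+ k * (3 + s) ^+ (n - k) * ('C(n, k))%:R * (schroeder k.+1)%:R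
      = 2 * (('C(n, k))%:R * (3 + s) ^+ (n - k) * (s ^+ k * T (- (3 / s)) (vC R) k)).
      move=> k; rewrite Sc T_refl; [ring | exact: vC_odd].
    under eq_bigr => k _ do rewrite E.
    by rewrite -mulr_sumr.
  rewrite T_scale T_comp (T_ext _ _ _ _ _ (_ : - (3 / s) + (3 + s) / s = 1)); last by field.
  rewrite (_ : s ^+ n.+2 = s ^+ n * 2); last by rewrite -s2 -exprD addn2.
  have sn : s ^+ n != 0 := expf_neq0 _ s0.
  by field; rewrite ?sn ?pnatr_eq0.
Qed.
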